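(* Let $X$ be an irreducible affine variety over $\mathbb{C}$, $\mathcal{F}$ an algebraic foliation on $X$, and $F$ a finite-dimensional $\mathbb{C}$-vector subspace of $\mathcal{O}_X$. Then the map $\varphi_F:X\to\mathbb{N}$, $\varphi_F(x)=\dim_{\mathbb{C}}F-\dim_{\mathbb{C}}(I(\mathcal{F},x)\cap F)$, is lower semi-continuous for the Zariski topology, i.e. $\varphi_F^{-1}([0,r])$ is Zariski closed for every $r$.
   Context: $\mathcal{O}_X$ is the ring of regular functions on $X$; an algebraic foliation $\mathcal{F}$ is a collection of $\mathbb{C}$-derivations of $\mathcal{O}_X$ stable under Lie bracket. For $x\in X$, $I(\mathcal{F},x)$ is the largest ideal $I$ of $\mathcal{O}_X$ contained in the maximal ideal of $x$ with $\partial(I)\subseteq I$ for all $\partial\in\mathcal{F}$. *)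

(* Defs.v *)
From mathcomp Require Import all_boot all_algebra complex reals.
Set Implicit Arguments. Unset Strict Implicit. Unset Printing Implicit Defensive.
Import GRing.Theory.
Local Open Scope ring_scope.

Section Defs.
Variable C : fieldType.
Variable A : comAlgType C.

Inductive in_subalg (gens : seq A) : A -> Prop :=
  | subalg_gen a : a \in gens -> in_subalg gens a
  | subalg_scal (c : C) : in_subalg gens (c%:A)
  | subalg_add a b : in_subalg gens a -> in_subalg gens b -> in_subalg gens (a + b)
  | subalg_mul a b : in_subalg gens a -> in_subalg gens b -> in_subalg gens (a * b).

(* A is a finitely generated C-algebra which is an integral domain:
   the coordinate ring O_X of an irreducible affine variety X over C. *)
Definition irred_affine_coord_ring : Prop :=
  [/\ (1 : A) != 0,
      (forall a b : A, a * b = 0 -> a = 0 \/ b = 0)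
    & exists gens : seq A, forall a, in_subalg gens a].

(* The points of X: C-algebra homomorphisms O_X -> C
   (equivalently, by the Nullstellensatz, the maximal ideals of O_X). *)
Definition is_point (x : A -> C) : Prop :=
  [/\ forall a b, x (a + b) = x a + x b,
      forall a b, x (a * b) = x a * x b,
      forall (c : C) a, x (c *: a) = c * x a
    & x 1 = 1].

Definition max_ideal (x : A -> C) : A -> Prop := fun f => x f = 0.

Definition is_derivation (d : A -> A) : Prop :=
  [/\ forall a b, d (a + b) = d a + d b,
      forall (c : C) a, d (c *: a) = c *: d a
    & forall a b, d (a * b) = a * d b + d a * b].

Definition lie_bracket (d1 d2 : A -> A) : A -> A := fun a => d1 (d2 a) - d2 (d1 a).

Definition is_foliation (F : (A -> A) -> Prop) : Prop :=
  (forall d, F d -> is_derivation d) /\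
  (forall d1 d2, F d1 -> F d2 -> F (lie_bracket d1 d2)).

Definition is_ideal (I : A -> Prop) : Prop :=
  [/\ I 0, (forall a b, I a -> I b -> I (a + b)) & (forall a b, I b -> I (a * b))].

(* I(F, x): the largest ideal contained in m_x stable under every d in F,
   realised as the union of all such ideals (which is itself such an ideal). *)
Definition I_fol (F : (A -> A) -> Prop) (x : A -> C) : A -> Prop :=
  fun f => exists I : A -> Prop,
    [/\ is_ideal I, (forall g, I g -> max_ideal x g),
        (forall d g, F d -> I g -> I (d g)) & I f].

Definition is_subspace (V : A -> Prop) : Prop :=
  [/\ V 0, (forall a b, V a -> V b -> V (a + b)) & (forall (c : C) a, V a -> V (c *: a))].

Definition lin_indep n (v : 'I_n -> A) : Prop :=
  forall c : 'I_n -> C, \sum_(i < n) c i *: v i = 0 -> forall i, c i = 0.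

Definition spans (V : A -> Prop) n (v : 'I_n -> A) : Prop :=
  forall a, V a <-> exists c : 'I_n -> C, a = \sum_(i < n) c i *: v i.

Definition has_dim (V : A -> Prop) (d : nat) : Prop :=
  exists v : 'I_d -> A, lin_indep v /\ spans V v.

Definition zariski_closed (Z : (A -> C) -> Prop) : Prop :=
  exists S : A -> Prop, forall x, is_point x -> (Z x <-> forall f, S f -> x f = 0).

End Defs.

(* Main.v *)
Require Import Defs.
From mathcomp Require Import all_boot all_algebra complex reals.
From Stdlib Require Import Classical IndefiniteDescription.
Set Implicit Arguments. Unset Strict Implicit. Unset Printing Implicit Defensive.
Import GRing.Theory.
Local Open Scope ring_scope.

Section Gen.
Variable C : fieldType.
Variable A : comAlgType C.

Fixpoint applyw (w : seq (A -> A)) (a : A) : A :=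
  match w with [::] => a | d :: w' => d (applyw w' a) end.
Fixpoint allF (P : (A -> A) -> Prop) (w : seq (A -> A)) : Prop :=
  match w with [::] => True | d :: w' => P d /\ allF P w' end.

Lemma der0 (d : A -> A) : is_derivation d -> d 0 = 0.
Proof.
case=> hadd _ _; have := hadd 0 0; rewrite addr0.
move/(congr1 (fun z => z - d 0)); by rewrite addrK subrr => <-.
Qed.

Variable Fol : (A -> A) -> Prop.
Hypothesis hFol : is_foliation Fol.

Lemma applyw_add w a b : allF Fol w -> applyw w (a + b) = applyw w a + applyw w b.
Proof.
elim: w => [//|d w IH] /= [hd hw]; rewrite IH //.
by case: (hFol.1 _ hd).
Qed.

Lemma applyw_scale w (c : C) a : allF Fol w -> applyw w (c *: a) = c *: applyw w a.
Proof.
elim: w => [//|d w IH] /= [hd hw]; rewrite IH //.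
by case: (hFol.1 _ hd).
Qed.

Lemma applyw0 w : allF Fol w -> applyw w 0 = 0.
Proof.
elim: w => [//|d w IH] /= [hd hw]; rewrite IH //.
exact: der0 (hFol.1 _ hd).
Qed.

Lemma applyw_sum w n (f : 'I_n -> A) : allF Fol w ->
  applyw w (\sum_i f i) = \sum_i applyw w (f i).
Proof.
move=> hw; exact: (big_morph _ (fun a b => applyw_add a b hw) (applyw0 hw)).
Qed.

Lemma applyw_cat w d a : applyw (w ++ [:: d]) a = applyw w (d a).
Proof. by elim: w => //= d' w ->. Qed.

Lemma allF_cat w d : allF Fol w -> Fol d -> allF Fol (w ++ [:: d]).
Proof. by elim: w => [|d' w IH] /= => [_ hd|[h1 h2] hd]; split => //; apply: IH. Qed.

Section Point.
Variable x : A -> C.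
Hypothesis hx : is_point x.

Lemma x0 : x 0 = 0.
Proof.
case: hx => hadd _ _ _; have := hadd 0 0; rewrite addr0.
move/(congr1 (fun z => z - x 0)); by rewrite addrK subrr => <-.
Qed.

Lemma x_sum (I : finType) (f : I -> A) : x (\sum_i f i) = \sum_i x (f i).
Proof. case: hx => hadd _ _ _; exact: (big_morph _ hadd x0). Qed.

Lemma x_prod (I : finType) (f : I -> A) : x (\prod_i f i) = \prod_i x (f i).
Proof. case: hx => _ hmul _ h1; exact: (big_morph _ hmul h1). Qed.

Lemma x_det n (M : 'M[A]_n) : x (\det M) = \det (map_mx x M).
Proof.
rewrite /determinant x_sum; apply: eq_bigr => s _.
case: hx => hadd hmul _ h1.
rewrite hmul x_prod; congr (_ * _); last by apply: eq_bigr => i _; rewrite mxE.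
case: (perm.odd_perm s); rewrite ?expr0 ?expr1 //.
have := hadd 1 (-1); rewrite subrr x0 h1 => /esym/eqP.
by rewrite addrC addr_eq0 => /eqP.
Qed.

Definition Jx f := forall g w, allF Fol w -> x (applyw w (g * f)) = 0.

Lemma I_folE f : I_fol Fol x f <-> Jx f.
Proof.
split.
  case=> I [[I0 Iadd Imul] Imax Istab If] g w hw.
  apply: Imax; elim: w hw => [_|d w IH [hd hw]] /=; first exact: Imul.
  by apply: Istab => //; apply: IH.
move=> hf; exists Jx; split => //.
- split.
  + by move=> g w hw; rewrite mulr0 applyw0 // x0.
  + move=> a b ha hb g w hw; case: hx => hadd _ _ _.
    by rewrite mulrDr applyw_add // hadd ha // hb // addr0.
  + by move=> a b hb g w hw; rewrite mulrA; apply: hb.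
- by move=> g hg; have := hg 1 [::] I; rewrite /= mul1r.
- move=> d g hd hg g' w hw.
  case: (hFol.1 _ hd) => dadd _ dmul.
  have := hg g' (w ++ [:: d]) (allF_cat hw hd).
  rewrite applyw_cat dmul applyw_add // .
  case: hx => hadd _ _ _; rewrite hadd hg // addr0 //.
Qed.
End Point.
End Gen.
Section Lin.
Variable C : fieldType.
Variable A : comAlgType C.
Variable n : nat.
Variable v : 'I_n -> A.
Hypothesis hv : lin_indep v.

Definition comb (c : 'rV[C]_n) : A := \sum_i c 0 i *: v i.

Lemma comb_inj c1 c2 : comb c1 = comb c2 -> c1 = c2.
Proof.
move=> h; apply/matrixP => i j; rewrite (ord1 i).
have E : \sum_k (c1 0 k - c2 0 k) *: v k = 0.
  under eq_bigr do rewrite scalerBl.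
  by rewrite sumrB -/(comb c1) h subrr.
by have /eqP := hv E j; rewrite subr_eq0 => /eqP.
Qed.

Lemma comb_mul m (a : 'rV[C]_m) (U : 'M[C]_(m, n)) :
  comb (a *m U) = \sum_j a 0 j *: comb (row j U).
Proof.
rewrite /comb; under eq_bigr do rewrite mxE scaler_suml.
rewrite exchange_big /=; apply: eq_bigr => j _.
rewrite scaler_sumr; apply: eq_bigr => i _.
by rewrite mxE scalerA.
Qed.

Lemma comb0 : comb 0 = 0.
Proof. by rewrite /comb big1 // => i _; rewrite mxE scale0r. Qed.

Lemma has_dim_rowspace (K : 'M[C]_n) (V : A -> Prop) :
  (forall f, V f <-> exists c, (c <= K)%MS /\ f = comb c) ->
  forall d, has_dim V d <-> d = \rank K.
Proof.
move=> hV d; split.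
  case=> u [hu hsp].
  have Vu j : V (u j).
    apply/hsp; exists (fun k => (k == j)%:R).
    rewrite (bigD1 j) //= eqxx scale1r big1 ?addr0 // => k /negbTE ->.
    by rewrite scale0r.
  pose U j := proj1_sig (constructive_indefinite_description _ (proj1 (hV _) (Vu j))).
  have hU j : (U j <= K)%MS /\ u j = comb (U j)
    by exact: (proj2_sig (constructive_indefinite_description _ (proj1 (hV _) (Vu j)))).
  pose Um := \matrix_j U j.
  have combU (a : 'rV[C]_d) : comb (a *m Um) = \sum_j a 0 j *: u j.
    rewrite comb_mul; apply: eq_bigr => j _; by rewrite rowK -(proj2 (hU j)).
  have fr : row_free Um.
    apply: inj_row_free => a ha; apply/matrixP => i j; rewrite (ord1 i) mxE.
    have := hu (fun j => a 0 j); rewrite -combU ha comb0 => /(_ erefl j); done.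
  have s1 : (Um <= K)%MS by apply/row_subP => j; rewrite rowK; exact: (proj1 (hU j)).
  have s2 : (K <= Um)%MS.
    apply/row_subP => k.
    have : V (comb (row k K)) by apply/hV; exists (row k K); split => //; exact: row_sub.
    case/hsp => a ha.
    have -> : row k K = (\row_j a j) *m Um.
      apply: comb_inj; rewrite ha combU; apply: eq_bigr => j _; by rewrite mxE.
    exact: submxMl.
  move: fr; rewrite -row_leq_rank => fr.
  apply: anti_leq; rewrite (leq_trans fr (mxrankS s1)) /=.
  exact: leq_trans (mxrankS s2) (rank_leq_row _).
move=> ->.
pose B := row_base K.
exists (fun j => comb (row j B)); split.
  move=> c hc.
  have : (\row_j c j) *m B = 0 *m B.
    apply: comb_inj; rewrite mul0mx comb0 comb_mul -[RHS]hc.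
    by apply: eq_bigr => j _; rewrite mxE.
  move/(row_free_inj (row_base_free K)) => h i.
  by move/matrixP: h => /(_ 0 i); rewrite !mxE.
move=> f; split.
  case/hV => c [cK ->].
  have : (c <= B)%MS by rewrite eq_row_base.
  case/submxP => D ->; exists (fun j => D 0 j); exact: comb_mul.
case=> a ->; apply/hV; exists ((\row_j a j) *m B); split.
  by rewrite -(eq_row_base K); exact: submxMl.
by rewrite comb_mul; apply: eq_bigr => j _; rewrite mxE.
Qed.
End Lin.

Lemma bounded_max (P : nat -> Prop) b : P 0 -> (forall k, P k -> (k <= b)%N) ->
  exists k, P k /\ forall k', P k' -> (k' <= k)%N.
Proof.
move=> P0; elim: b => [|b IH] hb.
  by exists 0%N; split => // k /hb.
case: (classic (P b.+1)) => [Pb|nPb]; first by exists b.+1.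
apply: IH => k Pk; have := hb k Pk; rewrite leq_eqVlt => /orP [/eqP hk|//].
by subst k.
Qed.

Section Main.
Variable C : fieldType.
Variable A : comAlgType C.
Variable Fol : (A -> A) -> Prop.
Hypothesis hFol : is_foliation Fol.
Variable n : nat.
Variable v : 'I_n -> A.
Hypothesis hv : lin_indep v.
Variable x : A -> C.
Hypothesis hx : is_point x.

Definition row_of g w : 'rV[C]_n := \row_i x (applyw w (g * v i)).
Definition rowsx (r : 'rV[C]_n) :=
  exists p : A * seq (A -> A), allF Fol p.2 /\ r = row_of p.1 p.2.

Lemma ev_comb g w c : allF Fol w ->
  x (applyw w (g * comb v c)) = (row_of g w *m c^T) 0 0.
Proof.
move=> hw; rewrite /comb mulr_sumr (applyw_sum hFol) // (x_sum hx) mxE.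
apply: eq_bigr => i _; rewrite -scalerAr (applyw_scale hFol) //.
case: hx => _ _ hs _; by rewrite hs !mxE mulrC.
Qed.

Lemma Jx_comb c : Jx Fol x (comb v c) <-> forall r, rowsx r -> r *m c^T = 0.
Proof.
split.
  move=> H r [[g w] [/= hw ->]]; apply/matrixP => i j.
  by rewrite (ord1 i) (ord1 j) [RHS]mxE -ev_comb // H.
move=> H g w hw; rewrite ev_comb // H ?mxE //; by exists (g, w).
Qed.

Definition Pk k := exists M : 'M[C]_(k, n), (forall j, rowsx (row j M)) /\ row_free M.

Lemma max_rows : exists k (M : 'M[C]_(k, n)),
  [/\ (forall j, rowsx (row j M)), row_free M,
      (forall r, rowsx r -> (r <= M)%MS) & (forall k', Pk k' -> (k' <= k)%N)].
Proof.
have [k [[M [Mr Mf]] kmax]] : exists k, Pk k /\ forall k', Pk k' -> (k' <= k)%N.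
  apply: (@bounded_max _ n).
    exists 0; split; first by case.
    by rewrite -row_leq_rank.
  move=> k [M [_]]; rewrite -row_leq_rank => h; exact: leq_trans h (rank_leq_col M).
exists k, M; split => // r hr.
case: (boolP (r <= M)%MS) => // nr; exfalso.
have : Pk (k + 1).
  exists (col_mx M r); split.
    move=> j; rewrite -(splitK j); case: (split j) => j' /=.
      by rewrite rowKu.
    rewrite rowKd (_ : row j' r = r) //; apply/rowP => i; by rewrite !mxE (ord1 j').
  rewrite -row_leq_rank.
  have rM : \rank M = k by apply/anti_leq; rewrite rank_leq_row /= row_leq_rank.
  have lt : (M < col_mx M r)%MS.
    by rewrite ltmxE -addsmxE addsmxSl /= -addsmxE addsmx_sub submx_refl.
  have := rank_ltmx lt; rewrite rM => h; apply: leq_trans h; by rewrite addn1.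
by move/kmax; rewrite addn1 ltnn.
Qed.
End Main.

Theorem main_gen (C : fieldType) (A : comAlgType C)
  (Fol : (A -> A) -> Prop) (hFol : is_foliation Fol)
  (F : A -> Prop) (dF : nat) (hdF : has_dim F dF) (r : nat) :
  zariski_closed (fun x : A -> C =>
    exists d : nat, has_dim (fun f => I_fol Fol x f /\ F f) d /\ (dF - d <= r)%N).
Proof.
case: hdF => v [hv hsp].
exists (fun f => exists (gs : 'I_r.+1 -> A) (ws : 'I_r.+1 -> seq (A -> A))
   (s : 'I_r.+1 -> 'I_dF), (forall a, allF Fol (ws a)) /\
   f = \det (\matrix_(a, b) applyw (ws a) (gs a * v (s b)))).
move=> x hx.
have [k [M [Mr Mf Msub kmax]]] := max_rows Fol v x.
have rM : \rank M = k by apply/anti_leq; rewrite rank_leq_row /= row_leq_rank.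
have kn : (k <= dF)%N by rewrite -rM rank_leq_col.
have hV f : (I_fol Fol x f /\ F f) <-> exists c, (c <= kermx M^T)%MS /\ f = comb v c.
  split.
    case=> hI /hsp [c' hf]; rewrite hf; exists (\row_i c' i); split; last first.
      by apply: eq_bigr => i _; rewrite mxE.
    have hc := proj1 (I_folE hFol hx _) hI.
    rewrite sub_kermx; apply/eqP; rewrite -[LHS]trmxK trmx_mul trmxK.
    have -> : M *m (\row_i c' i)^T = 0.
      apply/row_matrixP => j; rewrite row_mul row0.
      apply: (proj1 (Jx_comb hFol v hx (\row_i c' i))); last exact: Mr.
      have -> : comb v (\row_i c' i) = \sum_i c' i *: v i.
        by apply: eq_bigr => i _; rewrite mxE.
      by rewrite -hf.
    by rewrite trmx0.
  case=> c [hc ->]; split; last by apply/hsp; exists (fun i => c 0 i).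
  apply/(I_folE hFol hx)/(Jx_comb hFol v hx) => r0 /Msub /submxP [D ->].
  move: hc; rewrite sub_kermx => /eqP h.
  by rewrite -mulmxA -(trmxK M) -trmx_mul h trmx0 mulmx0.
have dimE d : has_dim (fun f => I_fol Fol x f /\ F f) d <-> d = (dF - k)%N.
  by rewrite (has_dim_rowspace hv hV) mxrank_ker mxrank_tr rM.
have ZE : (exists d, has_dim (fun f => I_fol Fol x f /\ F f) d /\ (dF - d <= r)%N)
          <-> (k <= r)%N.
  split.
    by case=> d [/dimE -> h]; rewrite subKn in h.
  move=> h; exists (dF - k)%N; split; first exact/dimE.
  by rewrite subKn.
rewrite ZE; split.
  move=> hk f [gs [ws [s [hw ->]]]].
  rewrite (x_det hx).
  set N := \matrix_a row_of v x (gs a) (ws a).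
  have -> : map_mx x (\matrix_(a, b) applyw (ws a) (gs a * v (s b))) = colsub s N.
    by apply/matrixP => a b; rewrite !mxE.
  apply/eqP; apply: contraT => hdet.
  have : colsub s N \in unitmx by rewrite unitmxE unitfE.
  rewrite -row_free_unit -row_leq_rank => h.
  have : (r.+1 <= \rank N)%N.
    apply: leq_trans h _.
    have -> : colsub s N = N *m colsub s 1%:M by rewrite mulmx_colsub mulmx1.
    exact: mxrankM_maxl.
  rewrite row_leq_rank => fN.
  have : Pk Fol v x r.+1.
    exists N; split => // j; rewrite /N rowK; exists (gs j, ws j); split => //; exact: hw.
  by move/kmax => h2; have := leq_trans h2 hk; rewrite ltnn.
move=> H; rewrite leqNgt; apply/negP => hk.
pose f := widen_ord hk.
have finj : injective f by move=> a b /(congr1 val) /= /val_inj.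
pose N := rowsub f M.
have fN : row_free N.
  apply/row_freeP; exists (pinvmx M *m colsub f 1%:M).
  rewrite mulmxA mul_rowsub_mx mulmxVp // -mxsub_mul mulmx1.
  by apply/matrixP => a b; rewrite !mxE (inj_eq finj).
have hrow j : rowsx Fol v x (row j N) by rewrite row_rowsub.
pose p j := proj1_sig (constructive_indefinite_description _ (hrow j)).
have hp j : allF Fol (p j).2 /\ row j N = row_of v x (p j).1 (p j).2
  := proj2_sig (constructive_indefinite_description _ (hrow j)).
have full : row_full N^T by rewrite -col_leq_rank mxrank_tr row_leq_rank.
pose g := fullrankfun full.
have U := fullrowsub_unit full.
have : x (\det (\matrix_(a, b) applyw (p a).2 ((p a).1 * v (g b)))) = 0.
  apply: H; exists (fun a => (p a).1), (fun a => (p a).2), g; split => //.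
  by move=> a; case: (hp a).
rewrite (x_det hx).
have -> : map_mx x (\matrix_(a, b) applyw (p a).2 ((p a).1 * v (g b))) = colsub g N.
  apply/matrixP => a b; rewrite !mxE.
  by move/matrixP: (proj2 (hp a)) => /(_ 0 (g b)); rewrite !mxE => ->.
move=> h0; move: U; rewrite unitmxE.
have -> : rowsub g N^T = (colsub g N)^T by rewrite trmx_mxsub.
by rewrite det_tr h0 unitr0.
Qed.

Theorem mainTheorem9 (R : realType) (A : comAlgType R[i])
  (hA : irred_affine_coord_ring A)
  (Fol : (A -> A) -> Prop) (hFol : is_foliation Fol)
  (F : A -> Prop) (hF : is_subspace F) (dF : nat) (hdF : has_dim F dF)
  (r : nat) :
  zariski_closed (fun x : A -> R[i] =>
    exists d : nat, has_dim (fun f => I_fol Fol x f /\ F f) d /\ (dF - d <= r)%N).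
Proof. exact: (@main_gen _ A Fol hFol F dF hdF r). Qed.
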